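(* If $G$ is a finite simple graph with chromatic number $\chi(G)=3$, then $\mathrm{Hom}(G,K_3)$ is disconnected.
   Context: $K_3$ is the complete graph on 3 vertices. For graphs $G,H$, the homomorphism complex $\mathrm{Hom}(G,H)$ is the polyhedral complex whose cells are functions $\eta:V(G)\to 2^{V(H)}\setminus\{\varnothing\}$ such that whenever $\{x,y\}\in E(G)$ we have $\eta(x)\times\eta(y)\subseteq E(H)$; the cell $\eta$ is a product of simplices of dimension $\sum_{v}(|\eta(v)|-1)$, with face relation $\eta\subseteq\tau$ iff $\eta(v)\subseteq\tau(v)$ for all $v$. Its 0-cells are the graph homomorphisms $G\to H$. Disconnected means the (geometric realization of the) complex is nonempty and has more than one path component. *)

(* Defs.v *)
From HB Require Import structures.
From mathcomp Require Import all_boot all_order all_algebra.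
From mathcomp Require Import all_classical all_reals all_analysis.
Set Implicit Arguments. Unset Strict Implicit. Unset Printing Implicit Defensive.
Import Order.TTheory GRing.Theory Num.Theory numFieldNormedType.Exports.
Local Open Scope ring_scope.
Local Open Scope classical_set_scope.

Definition simple_graph (T : finType) (e : rel T) : Prop :=
  symmetric e /\ irreflexive e.

Definition colorableb (T : finType) (e : rel T) (k : nat) : bool :=
  [exists f : {ffun T -> 'I_k}, [forall x, [forall y, e x y ==> (f x != f y)]]].

(* Chromatic number: least k with a proper k-colouring (for an irreflexive
   relation such a k <= #|T| always exists). *)
Definition chromatic_number (T : finType) (e : rel T) : nat :=
  find (colorableb e) (iota 0 #|T|.+1).

Definition K3_edge : rel 'I_3 := fun i j => i != j.

(* Geometric realization of Hom(G, K_3), as the union of the closed cells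
   (products of simplices) inside the product over V(G) of the standard
   simplex on V(K_3) (in R^(V(G) x V(K_3))): a point is p with p v a
   probability vector on V(K_3) for every v, whose support function
   eta(v) = {i | p v i > 0} is a cell, i.e. for every edge {x,y},
   supp p(x) x supp p(y) is contained in E(K_3). *)
Definition hom_K3_realization (R : realType) (T : finType) (e : rel T)
  : set (T -> 'I_3 -> R) :=
  [set p | (forall v i, 0 <= p v i) /\
           (forall v, \sum_(i < 3) p v i = 1) /\
           (forall x y, e x y -> forall i j : 'I_3,
               0 < p x i -> 0 < p y j -> K3_edge i j)].

(* A path in X (a subset of R^(T x 'I_3)) from a to b: a map [0,1] -> X,
   continuous in every coordinate (= continuous for the product topology). *)
Definition path_in (R : realType) (T : finType) (X : set (T -> 'I_3 -> R))
  (a b : T -> 'I_3 -> R) : Prop :=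
  exists g : R -> T -> 'I_3 -> R,
    (forall v i, {within `[0%R, 1%R], continuous (fun t : R => g t v i : R)}) /\
    (forall t, t \in `[0%R, 1%R] -> X (g t)) /\
    g 0%R = a /\ g 1%R = b.

Definition disconnected_space (R : realType) (T : finType)
  (X : set (T -> 'I_3 -> R)) : Prop :=
  (exists a, X a) /\ exists a b, X a /\ X b /\ ~ path_in X a b.

(* Main.v *)
Require Import Defs.
From HB Require Import structures.
From mathcomp Require Import all_boot all_order all_algebra.
From mathcomp Require Import all_classical all_reals all_analysis.
From mathcomp Require Import ring lra.
Set Implicit Arguments. Unset Strict Implicit. Unset Printing Implicit Defensive.
Import Order.TTheory GRing.Theory Num.Theory numFieldNormedType.Exports.
Local Open Scope ring_scope.

Section Aux.
Variable R : realType.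

Definition st (i j : 'I_3) : R :=
  if (i : nat) == j then 0 else if (j : nat) == ((i.+1) %% 3)%N then 1 else -1.

Definition o0 : 'I_3 := @Ordinal 3 0 isT.
Definition o1 : 'I_3 := @Ordinal 3 1 isT.
Definition o2 : 'I_3 := @Ordinal 3 2 isT.

Lemma sum3 (F : 'I_3 -> R) : \sum_(i < 3) F i = F o0 + F o1 + F o2.
Proof.
rewrite !big_ord_recr big_ord0 /= add0r.
do 3 f_equal; apply: val_inj => //.
Qed.

Lemma ord3P (P : 'I_3 -> Prop) : P o0 -> P o1 -> P o2 -> forall i, P i.
Proof.
move=> h0 h1 h2 [[|[|[|//]]] H].
- by rewrite (_ : Ordinal H = o0) //; apply: val_inj.
- by rewrite (_ : Ordinal H = o1) //; apply: val_inj.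
- by rewrite (_ : Ordinal H = o2) //; apply: val_inj.
Qed.

Definition fedge (p : 'I_3 -> R) (q : 'I_3 -> R) : R :=
  \sum_(i < 3) \sum_(j < 3) p i * q j * st i j.

Definition phi (p : 'I_3 -> R) (a : 'I_3) : R :=
  2 * \sum_(c < 3) p c * st c a.

Lemma key (p q : 'I_3 -> R) (a b : 'I_3) :
  (forall i, 0 <= p i) -> (forall i, 0 <= q i) ->
  \sum_(i < 3) p i = 1 -> \sum_(i < 3) q i = 1 ->
  (forall i, p i * q i = 0) -> 0 < p a -> 0 < q b ->
  fedge p q = st a b + phi q b - phi p a.
Proof.
move=> p0 q0; rewrite /fedge /phi !sum3 => sp sq pq pa qb.
have qa0 : q a = 0.
  by move: (pq a) => /eqP; rewrite mulf_eq0 (gt_eqF pa) => /eqP.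
have pb0 : p b = 0.
  by move: (pq b) => /eqP; rewrite mulf_eq0 (gt_eqF qb) orbF => /eqP.
have pq0 := pq o0; have pq1 := pq o1; have pq2 := pq o2.
have H0 := p0 o0; have H1 := p0 o1; have H2 := p0 o2.
have G0 := q0 o0; have G1 := q0 o1; have G2 := q0 o2.
move: a b pa qb qa0 pb0; apply: ord3P; apply: ord3P; rewrite /st /= => pa qb qa0 pb0;
  rewrite ?qa0 ?pb0 in sp sq pq0 pq1 pq2 *; try (by rewrite qa0 ltxx in qb); nra.
Qed.

Definition sg (i : 'I_3) : 'I_3 :=
  if (i : nat) == 1%N then o2 else if (i : nat) == 2%N then o1 else o0.

Lemma st_sg i j : st (sg i) (sg j) = - st i j.
Proof.
move: i j; apply: ord3P; apply: ord3P; rewrite /st /sg /=; by rewrite ?oppr0 ?opprK.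
Qed.

Lemma sg_inj i j : i != j -> sg i != sg j.
Proof. by move: i j; apply: ord3P; apply: ord3P. Qed.

Lemma st_pm i j : i != j -> st i j = 1 \/ st i j = -1.
Proof.
move=> ij; rewrite /st; case: ifP => [/eqP/ord_inj/eqP|_]; first by rewrite (negbTE ij).
by case: ifP; [left|right].
Qed.

Variable T : finType.
Variable e : rel T.

Fixpoint walkS (F : T -> T -> R) (x : T) (s : seq T) : R :=
  match s with [::] => 0 | y :: s' => F x y + walkS F y s' end.

Lemma walk_eq (F G : T -> T -> R) (ph : T -> R) x s :
  path e x s -> (forall u v, e u v -> G u v = F u v + ph v - ph u) ->
  walkS G x s = walkS F x s + ph (last x s) - ph x.
Proof.
move=> + hG; elim: s x => [|y s IH] x /=; first by move=> _; ring.
by move=> /andP[exy ps]; rewrite IH // hG //; ring.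
Qed.

Lemma walk_neg (F : T -> T -> R) x s :
  walkS (fun u v => - F u v) x s = - walkS F x s.
Proof. by elim: s x => [|y s IH] x /=; rewrite ?oppr0 // IH opprD. Qed.

Lemma walk_parity (h : T -> 'I_3) x s :
  path e x s -> (forall u v, e u v -> h u != h v) ->
  exists P M : nat, (P + M = size s)%N /\
     walkS (fun u v => st (h u) (h v)) x s = P%:R - M%:R.
Proof.
move=> + hh; elim: s x => [|y s IH] x /=; first by exists 0%N, 0%N; rewrite subrr.
move=> /andP[exy ps]; have [P [M [PM ->]]] := IH y ps.
case: (st_pm (hh _ _ exy)) => ->.
- exists P.+1, M; split; first by rewrite addSn PM.
  rewrite mulrSr; ring.
- exists P, M.+1; split; first by rewrite addnS PM.
  rewrite mulrSr; ring.
Qed.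

Lemma walk_nz (h : T -> 'I_3) x s :
  path e x s -> (forall u v, e u v -> h u != h v) -> odd (size s) ->
  walkS (fun u v => st (h u) (h v)) x s != 0.
Proof.
move=> ps hh os; have [P [M [PM ->]]] := walk_parity ps hh.
rewrite subr_eq0 eqr_nat; apply/negP => /eqP PMe.
by move: os; rewrite -PM PMe addnn odd_double.
Qed.

Lemma real_props (p : T -> 'I_3 -> R) : @hom_K3_realization R T e p ->
  (forall v i, 0 <= p v i) /\ (forall v, \sum_(i < 3) p v i = 1) /\
  (forall x y, e x y -> forall i j, 0 < p x i -> 0 < p y j -> K3_edge i j).
Proof. by []. Qed.

Lemma real_h0 (p : T -> 'I_3 -> R) : @hom_K3_realization R T e p ->
  exists h0 : T -> 'I_3, forall v, 0 < p v (h0 v).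
Proof.
move=> /real_props [p0 [ps _]].
exists (fun v => odflt o0 [pick i | 0 < p v i]) => v.
case: pickP => //= hn; exfalso.
have z : forall i, p v i = 0.
  by move=> i; move: (p0 v i) (hn i); rewrite le0r => /orP[/eqP|->].
by move: (ps v); rewrite sum3 !z !add0r => /eqP; rewrite eq_sym oner_eq0.
Qed.

Lemma S_val (p : T -> 'I_3 -> R) (h0 : T -> 'I_3) x s :
  @hom_K3_realization R T e p -> (forall v, 0 < p v (h0 v)) ->
  path e x s -> last x s = x ->
  walkS (fun u v => fedge (p u) (p v)) x s =
  walkS (fun u v => st (h0 u) (h0 v)) x s.
Proof.
move=> hp hpos ps ls.
have [p0 [psum pe]] := real_props hp.
rewrite (@walk_eq (fun u v => st (h0 u) (h0 v)) _ (fun v => phi (p v) (h0 v)) x s ps); first by rewrite ls addrK.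
move=> u v euv; apply: key => //.
move=> c; move: (p0 u c) (p0 v c); rewrite !le0r => /orP[/eqP->|pu]; first by rewrite mul0r.
move=> /orP[/eqP->|pv]; first by rewrite mulr0.
by have := pe _ _ euv c c pu pv; rewrite /K3_edge eqxx.
Qed.

Lemma S_proper (p : T -> 'I_3 -> R) (h0 : T -> 'I_3) :
  @hom_K3_realization R T e p -> (forall v, 0 < p v (h0 v)) ->
  forall u v, e u v -> h0 u != h0 v.
Proof.
move=> /real_props [_ [_ pe]] hpos u v euv; exact: pe _ _ euv _ _ (hpos u) (hpos v).
Qed.

Lemma pm_real (h : T -> 'I_3) : (forall x y, e x y -> h x != h y) ->
  @hom_K3_realization R T e (fun v i => if h v == i then 1 else 0).
Proof.
move=> hh; split; [|split].
- by move=> v i; case: ifP.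
- move=> v; rewrite sum3; move: (h v); apply: ord3P; rewrite /=; 
    rewrite ?eqxx /=; try lra.
- move=> x y exy i j; case: eqP => [<-|]; last by rewrite ltxx.
  case: eqP => [<-|]; last by rewrite ltxx.
  by move=> _ _; apply: hh.
Qed.


Local Open Scope classical_set_scope.
Definition Cw (f : R -> R) := {within `[0%R, 1%R], continuous f}.

Lemma CwD f g : Cw f -> Cw g -> Cw (fun t => f t + g t).
Proof. by move=> hf hg x; exact: (continuousD (hf x) (hg x)). Qed.

Lemma CwM f g : Cw f -> Cw g -> Cw (fun t => f t * g t).
Proof. by move=> hf hg x; exact: (continuousM (hf x) (hg x)). Qed.

Lemma Cwc (c : R) : Cw (fun _ => c).
Proof. by move=> x; apply: cvg_cst. Qed.

Lemma Cw_fedge (g : R -> T -> 'I_3 -> R) u v :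
  (forall v i, Cw (fun t => g t v i)) -> Cw (fun t => fedge (g t u) (g t v)).
Proof.
move=> hg.
have -> : (fun t => fedge (g t u) (g t v)) = (fun t =>
  g t u o0 * g t v o0 * st o0 o0 + g t u o0 * g t v o1 * st o0 o1 + g t u o0 * g t v o2 * st o0 o2 +
  (g t u o1 * g t v o0 * st o1 o0 + g t u o1 * g t v o1 * st o1 o1 + g t u o1 * g t v o2 * st o1 o2) +
  (g t u o2 * g t v o0 * st o2 o0 + g t u o2 * g t v o1 * st o2 o1 + g t u o2 * g t v o2 * st o2 o2)).
  by apply/funext => t; rewrite /fedge !sum3.
by repeat first [apply: CwD | apply: CwM | apply: Cwc | apply: hg].
Qed.

Lemma Cw_walk (g : R -> T -> 'I_3 -> R) x s :
  (forall v i, Cw (fun t => g t v i)) ->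
  Cw (fun t => walkS (fun u v => fedge (g t u) (g t v)) x s).
Proof.
move=> hg; elim: s x => [|y s IH] x /=; first exact: Cwc.
by apply: CwD; [apply: Cw_fedge|apply: IH].
Qed.


Local Close Scope classical_set_scope.

Lemma chi3 : simple_graph e -> chromatic_number e = 3%N ->
  colorableb e 3 /\ ~~ colorableb e 2.
Proof.
move=> [esym eirr] hc.
have hn : colorableb e #|T|.
  apply/existsP; exists [ffun v => enum_rank v]; apply/forallP => x; apply/forallP => y.
  apply/implyP => exy; rewrite !ffunE; apply/negP => /eqP /enum_rank_inj exy'.
  by move: exy; rewrite exy' eirr.
have hh : has (colorableb e) (iota 0 #|T|.+1).
  apply/hasP; exists #|T|; last exact: hn. by rewrite mem_iota add0n leq0n ltnSn.
have lt := hh; rewrite has_find in lt.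
move: hc; rewrite /chromatic_number => hc.
have lt3 : (3 < #|T|.+1)%N by move: lt; rewrite hc size_iota.
split.
- by have := nth_find 0%N hh; rewrite hc nth_iota.
- have := @before_find _ 0%N (colorableb e) (iota 0 #|T|.+1) 2; rewrite hc => /(_ isT).
  rewrite nth_iota ?add0n; first by move=> ->.
  exact: ltn_trans lt3.
Qed.

Definition Dr : rel (T * bool) := fun u v => e u.1 v.1 && (u.2 != v.2).

Lemma Dr_path u p : path Dr u p -> path e u.1 (map fst p).
Proof. by elim: p u => [|w p IH] u //= /andP[/andP[euw _] pp]; rewrite euw IH. Qed.

Lemma Dr_parity u p : path Dr u p ->
  (last u p).2 = if odd (size p) then ~~ u.2 else u.2.
Proof.
elim: p u => [|w p IH] u //= /andP[/andP[_ uw] pp]; rewrite (IH w pp).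
by move: uw; case: (u.2); case: (w.2); case: odd.
Qed.

Lemma lift_walk x p : path e x p -> forall b, exists b', connect Dr (x, b) (last x p, b').
Proof.
elim: p x => [|y p IH] x /=; first by move=> _ b; exists b.
move=> /andP[exy pp] b; have [b' hb'] := IH y pp (~~ b).
exists b'; apply: connect_trans hb'; apply: connect1; rewrite /Dr /= exy.
by case: b.
Qed.

Lemma odd_walk : simple_graph e -> ~~ colorableb e 2 ->
  exists x s, [/\ path e x s, last x s = x & odd (size s)].
Proof.
move=> [esym eirr] n2.
have symD : symmetric Dr.
  by move=> [u a] [v b]; rewrite /Dr /= esym eq_sym.
case: (boolP [exists v, connect Dr (v, false) (v, true)]).
  move=> /existsP [v /connectP [p pp lp]].
  exists v, (map fst p); split.
  - exact: (Dr_path pp).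
  - by rewrite (last_map fst p (v, false)) -lp.
  - by rewrite size_map; move: (Dr_parity pp); rewrite -lp /=; case: odd.
move=> hn; exfalso; move: n2 => /negP; apply.
have csD := sym_connect_sym symD.
have cse := sym_connect_sym esym.
pose c v := connect Dr (fingraph.root e v, false) (v, false).
have cF : forall v, ~~ c v -> connect Dr (fingraph.root e v, false) (v, true).
  move=> v ncv.
  have : connect e (fingraph.root e v) v by rewrite cse fingraph.connect_root.
  move=> /connectP [p pp lp]; have [b' hb] := lift_walk pp false.
  by move: hb; rewrite -lp; case: b' => //= hb; rewrite /c hb in ncv.
have noloop : forall v, ~~ connect Dr (v, false) (v, true).
  by move=> v; apply/negP => h; move/negP: hn; apply; apply/existsP; exists v.
apply/existsP; exists [ffun v => if c v then (@Ordinal 2 1 isT) else (@Ordinal 2 0 isT)].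
apply/forallP => x; apply/forallP => y; apply/implyP => exy; rewrite !ffunE.
have rxy : fingraph.root e x = fingraph.root e y by apply/(fingraph.rootP cse); apply: connect1.
case cx: (c x); case cy: (c y) => //.
- exfalso; move/negP: (noloop y); apply.
  apply: (@connect_trans _ _ (fingraph.root e y, false)).
    by rewrite csD; move: cy; rewrite /c.
  rewrite -rxy; apply: (@connect_trans _ _ (x, false)); first by move: cx; rewrite /c.
  apply: connect1; by rewrite /Dr /= exy.
- exfalso; move: cy; rewrite /c -rxy => /negbT/negP; apply.
  apply: (@connect_trans _ _ (x, true)); first exact: cF x (negbT cx).
  apply: connect1; by rewrite /Dr /= exy.
Qed.

End Aux.

Local Open Scope classical_set_scope.

Theorem theorem4p1 (R : realType) (T : finType) (e : rel T) :
  simple_graph e -> chromatic_number e = 3 ->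
  disconnected_space (@hom_K3_realization R T e).
Proof.
move=> sgr hchi.
have [/existsP [f3 /forallP pf3] n2] := chi3 sgr hchi.
have pf : forall x y, e x y -> f3 x != f3 y.
  by move=> x y exy; move/forallP: (pf3 x) => /(_ y); rewrite exy.
have pfs : forall x y, e x y -> sg (f3 x) != sg (f3 y).
  by move=> x y exy; apply: sg_inj; apply: pf.
have [x0 [s [ps ls os]]] := odd_walk sgr n2.
pose a := fun v i => if f3 v == i then (1 : R) else 0.
pose b := fun v i => if sg (f3 v) == i then (1 : R) else 0.
have ha : @hom_K3_realization R T e a.
  exact: (@pm_real R T e f3 pf).
have hb : @hom_K3_realization R T e b.
  exact: (@pm_real R T e (fun v => sg (f3 v)) pfs).
split; first by exists a.
exists a, b; split => //; split => //.
move=> [g [gc [gX [g0 g1]]]].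
pose S t := walkS (fun u v => fedge (g t u) (g t v)) x0 s.
pose W := walkS (fun u v => @st R (f3 u) (f3 v)) x0 s.
have WN : W != 0 by rewrite /W; exact: (walk_nz R ps pf os).
have S0 : S 0 = W.
  rewrite /S g0; apply: (S_val ha _ ps ls) => v; rewrite /a eqxx; exact: ltr01.
have S1 : S 1 = - W.
  rewrite /S g1 (@S_val R T e b (fun v => sg (f3 v)) x0 s hb _ ps ls); last first.
    by move=> v; rewrite /b eqxx; exact: ltr01.
  by rewrite -walk_neg; congr walkS; apply/funext => u; apply/funext => v; rewrite st_sg.
have cS : {within `[0%R, 1%R], continuous S} by apply: Cw_walk.
have hmid : Num.min (S 0) (S 1) <= 0 <= Num.max (S 0) (S 1).
  rewrite S0 S1; case: (lerP 0 W) => hW.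
    by rewrite ge_min le_max oppr_le0 hW orbT.
  by rewrite ge_min le_max oppr_ge0 (ltW hW) orbT.
have [c cI Sc] := @IVT R S 0 1 0 ler01 cS hmid.
have hc : @hom_K3_realization R T e (g c).
  apply: gX; rewrite inE /=; exact: cI.
have [h0 h0p] := real_h0 hc.
move: Sc; rewrite /S (S_val hc h0p ps ls) => /eqP; apply/negP.
apply: (walk_nz R ps _ os); exact: (S_proper hc h0p).
Qed.
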